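(* Let $p_{\rm data}$ be a probability density on $\mathbb{R}^d$, $\gamma=\mathcal{N}(0,I_d)$, and $\Phi:\mathbb{R}^d\to\mathbb{R}^d$ a measurable one-to-one map with $\Phi_\#\gamma$ having a density. Fix $y$ and a measurable likelihood $x_0\mapsto p(y\mid x_0)\ge0$ with $\sup_{x_0}p(y\mid x_0)<\infty$, $Z_y:=\int p(y\mid x)p_{\rm data}(x)dx>0$ and $\int p(y\mid x)\Phi_\#\gamma(x)dx>0$. Let $p_{0,y}\propto p(y\mid x_0)p_{\rm data}(x_0)$ be the true posterior, let $\tilde p_{1,y}(x_1)\propto p(y\mid\Phi(x_1))\gamma(x_1)$ be the noise-space model posterior, and let $\tilde p_{1,y}^S$ be any probability distribution on $\mathbb{R}^d$; set $\tilde p_{0,y}^S:=\Phi_\#\tilde p_{1,y}^S$. If $\mathrm{TV}(p_{\rm data},\Phi_\#\gamma)\le\varepsilon$ and $\mathrm{TV}(\tilde p_{1,y},\tilde p_{1,y}^S)\le\varepsilon_S$, then $$\mathrm{TV}(p_{0,y},\tilde p_{0,y}^S)\le 2\kappa_y\varepsilon+\varepsilon_S,\qquad \kappa_y:=\frac{\sup_{x_0}p(y\mid x_0)}{\int p(y\mid x)p_{\rm data}(x)\,dx}.$$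
   Context: $\propto$ denotes equality up to a normalizing constant making the density integrate to one. For a measurable map $T$ and distribution $P$, $T_\#P(A)=P(T^{-1}A)$ is the push-forward. $\mathrm{TV}(P,Q)=\sup_A|P(A)-Q(A)|$, equal to $\frac12\int|p-q|$ for densities. Note $\Phi_\#\tilde p_{1,y}$ is the model posterior $\propto p(y\mid x_0)\Phi_\#\gamma(x_0)$. *)

(* Defs.v *)
(* R^d is modelled as d.-tuple R with the library's
   product (coordinate-generated = Borel) sigma-algebra. *)
From HB Require Import structures.
From mathcomp Require Import all_boot all_order all_algebra.
From mathcomp Require Import all_classical all_reals all_analysis.
Set Implicit Arguments. Unset Strict Implicit. Unset Printing Implicit Defensive.
Import Order.TTheory GRing.Theory Num.Theory.
Local Open Scope classical_set_scope.
Local Open Scope ring_scope.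
Local Open Scope ereal_scope.

Section defs.
Variable R : realType.

(* Lebesgue integral over R^n of a (nonnegative) function, computed as the
   iterated one-dimensional Lebesgue integral (equal to the n-dimensional
   Lebesgue integral for nonnegative measurable functions by Tonelli). *)
Fixpoint intRd (n : nat) : (n.-tuple R -> \bar R) -> \bar R :=
  match n with
  | 0 => fun f => f [tuple]
  | n'.+1 => fun f =>
      (\int[@lebesgue_measure R]_x intRd (fun t : n'.-tuple R => f [tuple of x :: t]))
  end.

Definition dens_meas (n : nat) (f : n.-tuple R -> R) (A : set (n.-tuple R)) : \bar R :=
  intRd (fun x => ((\1_A x)%R * f x)%:E).

Definition gauss_pdf (n : nat) (x : n.-tuple R) : R :=
  (\prod_(i < n) normal_pdf 0 1 (tnth x i))%R.

Definition pushf (n : nat) (Phi : n.-tuple R -> n.-tuple R)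
  (P : set (n.-tuple R) -> \bar R) (A : set (n.-tuple R)) : \bar R :=
  P (Phi @^-1` A).

Definition TV (n : nat) (P Q : set (n.-tuple R) -> \bar R) : \bar R :=
  ereal_sup [set `|P A - Q A| | A in [set A : set (n.-tuple R) | measurable A]].

End defs.

(* Main.v *)
Require Import Defs.
From HB Require Import structures.
From mathcomp Require Import all_boot all_order all_algebra.
From mathcomp Require Import all_classical all_reals all_analysis.
From mathcomp Require Import measurable_realfun lebesgue_integral.
From mathcomp Require Import ring lra.
Set Implicit Arguments. Unset Strict Implicit. Unset Printing Implicit Defensive.
Import Order.TTheory GRing.Theory Num.Theory.
Local Open Scope classical_set_scope.
Local Open Scope ring_scope.
Local Open Scope ereal_scope.



Section lamdef.
Variable R : realType.
Local Notation leb := (@lebesgue_measure R).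

Definition consf n (p : R * n.-tuple R) : n.+1.-tuple R := [tuple of p.1 :: p.2].
Definition uncons n (t : n.+1.-tuple R) : R * n.-tuple R := (thead t, [tuple of behead t]).

Lemma measurable_consf n : measurable_fun setT (@consf n).
Proof. exact: measurable_cons. Qed.

Lemma measurable_uncons n : measurable_fun setT (@uncons n).
Proof.
apply/measurable_fun_pairP; split.
  exact: (@measurable_tnth _ _ n.+1 ord0).
exact: measurable_behead.
Qed.

Lemma consfK n : cancel (@consf n) (@uncons n).
Proof. by case=> x t; rewrite /uncons /consf /=; congr pair; apply: val_inj. Qed.

Lemma unconsK n : cancel (@uncons n) (@consf n).
Proof. by move=> t; apply: val_inj; rewrite /= [in RHS](tuple_eta t). Qed.

Lemma prod_sf d1 d2 (T1 : measurableType d1) (T2 : measurableType d2)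
  (m1 : {sigma_finite_measure set T1 -> \bar R})
  (m2 : {sigma_finite_measure set T2 -> \bar R}) : sigma_finite setT (m1 \x m2).
Proof.
have /sigma_finiteP[F [TF ndF Foo]] := sigma_finiteT m1.
have /sigma_finiteP[G [TG ndG Goo]] := sigma_finiteT m2.
exists (fun n => F n `*` G n).
 rewrite -setXTT TF TG predeqE => -[x y]; split.
    move=> [/= [n _ Fnx] [k _ Gky]]; exists (maxn n k) => //; split.
    - by move: x Fnx; exact/subsetPset/ndF/leq_maxl.
    - by move: y Gky; exact/subsetPset/ndG/leq_maxr.
  by move=> [n _ []/= ? ?]; split; exists n.
move=> k; have [? ?] := Foo k; have [? ?] := Goo k.
split; first exact: measurableX.
by rewrite product_measure1E// lte_mul_pinfty// ge0_fin_numE.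
Qed.

Section step.
Variables (n : nat) (m : {sigma_finite_measure set (n.-tuple R) -> \bar R}).
Definition lstep := pushforward (leb \x m) (@consf n).

Let lstep0 : lstep set0 = 0.
Proof. by rewrite /lstep /pushforward preimage_set0 measure0. Qed.

Let lstep_ge0 A : 0 <= lstep A.
Proof. rewrite /lstep /pushforward; exact: measure_ge0. Qed.

Let lstep_sa : semi_sigma_additive lstep.
Proof.
move=> F mF tF mUF; rewrite /lstep /pushforward preimage_bigcup.
apply: measure_semi_sigma_additive.
- by move=> k; rewrite -[X in measurable X]setTI; exact: measurable_consf.
- apply/trivIsetP => /= i j _ _ ij; rewrite -preimage_setI.
  by move/trivIsetP : tF => /(_ _ _ _ _ ij) ->//; rewrite preimage_set0.
- by rewrite -preimage_bigcup -[X in measurable X]setTI; exact: measurable_consf.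
Qed.

HB.instance Definition _ := isMeasure.Build _ _ _ lstep lstep0 lstep_ge0 lstep_sa.

Let lstep_sf : sigma_finite setT lstep.
Proof.
have [F TF mF] := prod_sf leb m.
exists (fun k => @uncons n @^-1` F k).
  apply/seteqP; split => // t _.
  have : (setT : set (R * n.-tuple R)) (uncons t) by [].
  by rewrite TF => -[k _ Fk]; exists k.
move=> k; split.
  by rewrite -[X in measurable X]setTI; apply: measurable_uncons => //; case: (mF k).
rewrite /lstep /pushforward.
have -> : @consf n @^-1` (@uncons n @^-1` F k) = F k.
  by apply/seteqP; split => p /=; rewrite consfK.
by case: (mF k).
Qed.

HB.instance Definition _ := Measure_isSigmaFinite.Build _ _ _ lstep lstep_sf.

End step.

Fixpoint lam n : {sigma_finite_measure set (n.-tuple R) -> \bar R} :=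
  match n with
  | 0 => [the {sigma_finite_measure set (0.-tuple R) -> \bar R} of \d_([tuple] : 0.-tuple R)]
  | n'.+1 => [the {sigma_finite_measure set _ -> \bar R} of lstep (lam n')]
  end.


Lemma intRdE n (f : n.-tuple R -> \bar R) : measurable_fun [set: n.-tuple R] f ->
  (forall x, 0 <= f x) -> intRd f = \int[lam n]_x f x.
Proof.
elim: n f => [|n IH] f mf f0.
  rewrite /= integral_dirac// diracT mul1e /=.
  by congr f; apply: val_inj; case: ([tuple] : 0.-tuple R) => -[].
rewrite /=.
have mfx x : measurable_fun setT (fun t : n.-tuple R => f [tuple of x :: t]).
  apply: measurableT_comp => //.
  exact: (@measurable_cons _ _ (n.-tuple R) R (fun _ => x) n id).
transitivity (\int[leb]_x \int[lam n]_t f [tuple of x :: t]).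
  by apply: eq_integral => x _; rewrite IH.
have mfc : measurable_fun setT (f \o @consf n) by apply: measurableT_comp => //; exact: measurable_consf.
transitivity (\int[leb \x lam n]_z (f \o @consf n) z).
  symmetry; apply: (@fubini_tonelli1 _ _ _ _ _ leb (lam n) (f \o @consf n)) => //.
  by move=> p; exact: f0.
change (lam n.+1) with (lstep (lam n)) .
rewrite /lstep ge0_integral_pushforward//.
  exact: measurable_consf.
Qed.

End lamdef.



Record dens (R : realType) (n : nat) := Dens {
  df :> n.-tuple R -> R;
  dmf : measurable_fun [set: n.-tuple R] df;
  df0 : forall x, (0 <= df x)%R }.

Definition nu (R : realType) (n : nat) (D : dens R n) :=
  fun A : set (n.-tuple R) => \int[lam R n]_(x in A) (df D x)%:E.

Section dens.
Variables (R : realType) (n : nat) (D : dens R n).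
Local Notation f := (df D).
Let mf : measurable_fun [set: n.-tuple R] f := dmf D.
Let f0 : forall x, (0 <= f x)%R := df0 D.
Local Notation lm := (lam R n).
Local Notation nu := (nu D).

Let mfE : measurable_fun [set: n.-tuple R] (EFin \o f).
Proof. exact/measurable_EFinP. Qed.

Let nu0 : nu set0 = 0. Proof. exact: integral_set0. Qed.
Let nu_ge0 A : 0 <= nu A. Proof. by apply: integral_ge0 => x _; rewrite lee_fin. Qed.
Let nu_sa : semi_sigma_additive nu.
Proof. by apply: semi_sigma_additive_nng_induced => // x; rewrite lee_fin. Qed.

HB.instance Definition _ := isMeasure.Build _ _ _ nu nu0 nu_ge0 nu_sa.

Import HBNNSimple.

Lemma densE (h : n.-tuple R -> \bar R) : (forall x, 0 <= h x) ->
  measurable_fun [set: n.-tuple R] h ->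
  \int[nu]_x h x = \int[lm]_x (h x * (f x)%:E).
Proof.
move=> h0 mh.
pose hn := nnsfun_approx measurableT mh.
have -> : \int[nu]_x h x = lim (\int[nu]_x (EFin \o hn k) x @[k --> \oo]).
  have hE x : h x = lim ((EFin \o hn k) x @[k --> \oo]).
    by apply/esym/cvg_lim => //; exact: cvg_nnsfun_approx.
  under eq_integral => x _ do rewrite hE.
  apply: monotone_convergence => //.
  - by move=> k; exact/measurable_EFinP/measurable_funP.
  - by move=> k x _; rewrite lee_fin.
  - by move=> x _ a b ab; rewrite lee_fin; exact/lefP/nd_nnsfun_approx.
have -> : \int[lm]_x (h x * (f x)%:E) =
    lim (\int[lm]_x ((EFin \o hn k) x * (f x)%:E) @[k --> \oo]).
  have fg x : h x * (f x)%:E = lim (((EFin \o hn k) x * (f x)%:E) @[k --> \oo]).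
    by apply/esym/cvg_lim => //; apply: cvgeZr => //; exact: cvg_nnsfun_approx.
  under eq_integral => x _ do rewrite fg.
  apply: monotone_convergence => [//| | |].
  - by move=> k; apply/emeasurable_funM => //; exact/measurable_EFinP.
  - by move=> k x _ /=; rewrite mule_ge0 ?lee_fin.
  - by move=> x _ a b ab/=; rewrite lee_wpmul2r ?lee_fin//; exact/lefP/nd_nnsfun_approx.
suff suf k : \int[lm]_x ((EFin \o hn k) x * (f x)%:E) = \int[nu]_x (EFin \o hn k) x.
  by congr (limn _); apply/funext => k; rewrite suf.
transitivity (\int[nu]_x
   (\sum_(y \in range (hn k)) (y * \1_(hn k @^-1` [set y]) x)%:E)); last first.
  by apply: eq_integral => t tE; rewrite /= fimfunE -fsumEFin.
have indich m r : measurable_fun setT (fun x => (r * \1_(hn m @^-1` [set r]) x)%:E).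
  by apply: (measurable_comp measurableT) => //; exact: measurable_funM.
rewrite ge0_integral_fsum//; last by move=> m y Ey; exact: nnfun_muleindic_ge0.
transitivity (\int[lm]_x (\sum_(y \in range (hn k))
    (y * \1_(hn k @^-1` [set y]) x)%:E * (f x)%:E)).
  under [RHS]eq_integral => x xE.
    rewrite -ge0_mule_fsuml => [|y]; last by rewrite EFinM; exact: nnfun_muleindic_ge0.
    rewrite fsumEFin // -(fimfunE _ x); over.
  by [].
rewrite ge0_integral_fsum//; last 2 first.
  - by move=> y; apply: emeasurable_funM => //.
  - by move=> m y Ey; apply: mule_ge0; [rewrite EFinM; exact: nnfun_muleindic_ge0|rewrite lee_fin].
apply: eq_fsbigr => r rhn.
under [RHS]eq_integral do rewrite EFinM.
rewrite integralZl_indic_nnsfun => //.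
under eq_integral do rewrite EFinM -muleA.
rewrite ge0_integralZl//.
- under eq_integral do rewrite muleC.
  rewrite (eq_integral ((EFin \o f) \_ (hn k @^-1` [set r]))); last first.
    by move=> x xE; rewrite epatch_indic.
  by rewrite -integral_mkcondr integral_indic// setTI setIT.
- by apply: emeasurable_funM => //; exact/measurable_EFinP.
- by move=> t Et; rewrite mule_ge0 ?lee_fin.
- by move: rhn; rewrite inE => -[t _ <-]; rewrite lee_fin.
Qed.

End dens.



Section C.
Variables (R : realType) (n : nat).
Local Notation T := (n.-tuple R).
Local Notation lm := (lam R n).

Lemma indic_nuE (D : dens R n) A : measurable A ->
  \int[lm]_x ((\1_A x)%R * df D x)%:E = nu D A.
Proof.
move=> mA; rewrite /nu [RHS]integral_mkcond; apply: eq_integral => x _.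
by rewrite epatch_indic -EFinM mulrC.
Qed.

Lemma dens_measE (D : dens R n) A : measurable A -> dens_meas (df D) A = nu D A.
Proof.
move=> mA; rewrite /dens_meas intRdE.
- exact: indic_nuE.
- by apply/measurable_EFinP; apply: measurable_funM => //; exact: dmf.
- by move=> x; rewrite lee_fin mulr_ge0 ?df0.
Qed.

Lemma pushF (Phi : T -> T) (G Q : dens R n) :
  measurable_fun [set: T] Phi ->
  (forall A, measurable A -> pushf Phi (dens_meas (df G)) A = dens_meas (df Q) A) ->
  forall h : T -> R, measurable_fun [set: T] h -> (forall x, 0 <= h x)%R ->
  \int[lm]_x (h (Phi x) * df G x)%:E = \int[lm]_x (h x * df Q x)%:E.
Proof.
move=> mPhi HA h mh h0.
have E1 : \int[lm]_x (h (Phi x) * df G x)%:E = \int[nu G]_x (h (Phi x))%:E.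
{ rewrite densE //.
  all: try (by move=> x; rewrite lee_fin).
  all: try (by apply/measurable_EFinP; exact: measurableT_comp).
  all: try (by apply: eq_integral => x _; rewrite EFinM). }
have E2 : \int[nu G]_x (h (Phi x))%:E = \int[pushforward (nu G) Phi]_x (h x)%:E.
{ rewrite ge0_integral_pushforward //.
  all: try (by move=> x _; rewrite lee_fin).
  all: try (exact/measurable_EFinP).
  all: try (by rewrite preimage_setT). }
have E3 : \int[pushforward (nu G) Phi]_x (h x)%:E = \int[nu Q]_x (h x)%:E.
{ apply: eq_measure_integral => A mA _.
  have mPA : measurable (Phi @^-1` A) by rewrite -[X in measurable X]setTI; exact: mPhi.
  change (nu G (Phi @^-1` A) = nu Q A).
  rewrite -dens_measE // -dens_measE //; exact: HA. }
have E4 : \int[nu Q]_x (h x)%:E = \int[lm]_x (h x * df Q x)%:E.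
{ rewrite densE //.
  all: try (by move=> x; rewrite lee_fin).
  all: try (exact/measurable_EFinP).
  all: try (by apply: eq_integral => x _; rewrite EFinM). }
by rewrite E1 E2 E3 E4.
Qed.

Lemma nu_le_setT (D : dens R n) A : measurable A -> nu D A <= nu D setT.
Proof.
move=> mA; apply: ge0_subset_integral => //.
  apply/measurable_EFinP; exact: dmf.
by move=> x _; rewrite lee_fin df0.
Qed.

Lemma keyTV (P Q : dens R n) (g : T -> R) (M e : R) :
  (0 <= M)%R ->
  measurable_fun [set: T] g -> (forall x, 0 <= g x <= M)%R ->
  (forall S, measurable S -> `|nu P S - nu Q S| <= e%:E) ->
  nu P setT < +oo -> nu Q setT < +oo ->
  \int[lm]_x (g x * P x)%:E - \int[lm]_x (g x * Q x)%:E <= (M * e)%:E.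
Proof.
move=> M0 mg gM HS Pfin Qfin.
have mP := dmf P; have mQ := dmf Q; have P0 := df0 P; have Q0 := df0 Q.
pose S := [set x | (Q x < P x)%R].
have mS : measurable S.
  have := @measurable_lte _ _ R setT measurableT (EFin \o df Q) (EFin \o df P).
  rewrite setTI.
  have -> : [set x | ((EFin \o df Q) x < (EFin \o df P) x)%E] = S.
    by apply/seteqP; split => x /=; rewrite lte_fin.
  by apply; exact/measurable_EFinP.
have pw x : (g x * P x + M * ((\1_S x) * Q x) <= g x * Q x + M * ((\1_S x) * P x))%R.
  have /andP[g0 gM'] := gM x; have := P0 x; have := Q0 x.
  rewrite indicE; case: (boolP (x \in S)) => xS.
    have : (Q x < P x)%R by move: xS; rewrite inE.
    move=> QP q0 p0; rewrite !mul1r.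
    have : (0 <= (M - g x) * (P x - Q x))%R by apply: mulr_ge0; rewrite subr_ge0 // ltW.
    nra.
  have : (P x <= Q x)%R by move: xS; rewrite notin_setE /S /= => /negP; rewrite -leNgt.
  move=> PQ q0 p0; rewrite !mul0r !mulr0 !addr0.
  have : (0 <= g x * (Q x - P x))%R by apply: mulr_ge0; rewrite // subr_ge0.
  nra.
have mgP : measurable_fun [set: T] (fun x => (g x * P x)%:E) by apply/measurable_EFinP; exact: measurable_funM.
have mgQ : measurable_fun [set: T] (fun x => (g x * Q x)%:E) by apply/measurable_EFinP; exact: measurable_funM.
have mSP : measurable_fun [set: T] (fun x => (M * ((\1_S x) * P x))%:E).
  by apply/measurable_EFinP; apply: measurable_funM => //; exact: measurable_funM.
have mSQ : measurable_fun [set: T] (fun x => (M * ((\1_S x) * Q x))%:E).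
  by apply/measurable_EFinP; apply: measurable_funM => //; exact: measurable_funM.
have gP0 x : 0 <= (g x * P x)%:E by rewrite lee_fin mulr_ge0 //; case/andP: (gM x).
have gQ0 x : 0 <= (g x * Q x)%:E by rewrite lee_fin mulr_ge0 //; case/andP: (gM x).
have SP0 x : 0 <= (M * ((\1_S x) * P x))%:E by rewrite lee_fin !mulr_ge0.
have SQ0 x : 0 <= (M * ((\1_S x) * Q x))%:E by rewrite lee_fin !mulr_ge0.
have Hint : \int[lm]_x ((g x * P x)%:E + (M * ((\1_S x) * Q x))%:E) <=
            \int[lm]_x ((g x * Q x)%:E + (M * ((\1_S x) * P x))%:E).
  apply: ge0_le_integral => //.
  - by move=> x _; rewrite adde_ge0.
  - exact: emeasurable_funD.
  - exact: emeasurable_funD.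
  - by move=> x _; rewrite -!EFinD lee_fin.
rewrite ge0_integralD // in Hint.
rewrite ge0_integralD // in Hint.
have ZM (D : dens R n) : \int[lm]_x (M * ((\1_S x) * D x))%:E = M%:E * nu D S.
  under eq_integral do rewrite EFinM.
  rewrite ge0_integralZl //; first by rewrite indic_nuE.
  - by apply/measurable_EFinP; apply: measurable_funM => //; exact: dmf.
  - by move=> x _; rewrite lee_fin mulr_ge0 ?df0.
rewrite !ZM in Hint.
set a := \int[lm]_x _ in Hint *.
set b := \int[lm]_x (g x * Q x)%:E in Hint *.
have afin : a \is a fin_num.
  rewrite ge0_fin_numE; last by apply: integral_ge0 => x _.
  apply: (@le_lt_trans _ _ (\int[lm]_x (M * P x)%:E)).
    apply: ge0_le_integral => //; first by apply/measurable_EFinP; exact: measurable_funM.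
    by move=> x _; rewrite lee_fin ler_wpM2r //; case/andP: (gM x).
  under eq_integral do rewrite EFinM.
  rewrite ge0_integralZl //; last 2 first.
    exact/measurable_EFinP.
    by move=> x _; rewrite lee_fin.
  by rewrite lte_mul_pinfty.
have bfin : b \is a fin_num.
  rewrite ge0_fin_numE; last by apply: integral_ge0 => x _.
  apply: (@le_lt_trans _ _ (\int[lm]_x (M * Q x)%:E)).
    apply: ge0_le_integral => //; first by apply/measurable_EFinP; exact: measurable_funM.
    by move=> x _; rewrite lee_fin ler_wpM2r //; case/andP: (gM x).
  under eq_integral do rewrite EFinM.
  rewrite ge0_integralZl //; last 2 first.
    exact/measurable_EFinP.
    by move=> x _; rewrite lee_fin.
  by rewrite lte_mul_pinfty.
have pSfin : nu P S \is a fin_num.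
  rewrite ge0_fin_numE; last exact: measure_ge0.
  exact: (le_lt_trans (nu_le_setT P mS)).
have qSfin : nu Q S \is a fin_num.
  rewrite ge0_fin_numE; last exact: measure_ge0.
  exact: (le_lt_trans (nu_le_setT Q mS)).
have := HS S mS.
rewrite -(fineK afin) -(fineK bfin) -(fineK pSfin) -(fineK qSfin) in Hint *.
move=> He; rewrite -EFinB lee_fin.
move: He; rewrite -EFinB abse_EFin lee_fin => He.
move: Hint; rewrite -!EFinM -!EFinD lee_fin => Hint.
set a' := fine a in Hint *; set b' := fine b in Hint *.
set p' := fine (nu P S) in Hint He *; set q' := fine (nu Q S) in Hint He *.
have : (p' - q' <= e)%R by apply: le_trans He; exact: ler_norm.
move=> He'.
have : (M * (p' - q') <= M * e)%R by exact: ler_wpM2l.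
nra.
Qed.

End C.



Lemma measurable_prodfun (R : realType) n m (F : 'I_m -> n.-tuple R -> R) :
  (forall i, measurable_fun [set: n.-tuple R] (F i)) ->
  measurable_fun [set: n.-tuple R] (fun x => \prod_(i < m) F i x)%R.
Proof.
move=> mF.
suff H (s : seq 'I_m) : measurable_fun [set: n.-tuple R] (fun x => \prod_(i <- s) F i x)%R.
  exact: H.
elim: s => [|i s IH].
  by under eq_fun do rewrite big_nil; exact: measurable_cst.
by under eq_fun do rewrite big_cons; exact: measurable_funM.
Qed.

Lemma measurable_gauss (R : realType) n : measurable_fun [set: n.-tuple R] (@gauss_pdf R n).
Proof.
apply: measurable_prodfun => i.
apply: measurableT_comp; first exact: measurable_normal_pdf.
exact: measurable_tnth.
Qed.

Lemma gauss_ge0 (R : realType) n (x : n.-tuple R) : (0 <= gauss_pdf x)%R.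
Proof. by apply: prodr_ge0 => i _; exact: normal_pdf_ge0. Qed.

Lemma eabsC (R : realType) (x y : \bar R) : x \is a fin_num -> y \is a fin_num ->
  `|x - y| = `|y - x|.
Proof. by move=> fx fy; rewrite -(fineK fx) -(fineK fy) -!EFinB !abse_EFin distrC. Qed.

Lemma realbound (R : realType) (a b Zp Zq M e : R) :
  (0 < Zp)%R -> (0 < Zq)%R -> (0 <= b <= Zq)%R -> (0 <= M * e)%R ->
  (`|a - b| <= M * e)%R -> (`|Zp - Zq| <= M * e)%R ->
  (`|a / Zp - b / Zq| <= 2 * (M / Zp) * e)%R.
Proof.
move=> Zp0 Zq0 /andP[b0 bZ] Me hab hZ.
pose t := (b / Zq)%R.
have t0 : (0 <= t)%R by rewrite divr_ge0 // ltW.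
have t1 : (t <= 1)%R by rewrite ler_pdivrMr // mul1r.
have bt : b = (t * Zq)%R by rewrite /t mulrVK // unitfE gt_eqF.
have -> : (a / Zp - b / Zq = (a - t * Zp) / Zp)%R.
  by rewrite /t mulrBl mulrK // unitfE gt_eqF.
have -> : (2 * (M / Zp) * e = (2 * (M * e)) / Zp)%R by field; rewrite gt_eqF.
rewrite normrM (@gtr0_norm _ (Zp^-1)) ?invr_gt0 // ler_pM2r ?invr_gt0 //.
have -> : (a - t * Zp = (a - b) + t * (Zq - Zp))%R by rewrite bt; ring.
rewrite (le_trans (ler_normD _ _)) // normrM ger0_norm //.
have : (`|Zq - Zp| <= M * e)%R by rewrite distrC.
nra.
Qed.

Section Main.
Variables (R : realType) (n : nat).
Local Notation T := (n.-tuple R).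
Local Notation lm := (lam R n).

Lemma int_fin (D : dens R n) (g : T -> R) (M : R) :
  (0 <= M)%R -> measurable_fun [set: T] g -> (forall x, 0 <= g x <= M)%R ->
  nu D setT < +oo -> \int[lm]_x (g x * D x)%:E \is a fin_num.
Proof.
move=> M0 mg gM Dfin; have mD := dmf D; have D0 := df0 D.
rewrite ge0_fin_numE; last first.
  by apply: integral_ge0 => x _; rewrite lee_fin mulr_ge0 //; case/andP: (gM x).
apply: (@le_lt_trans _ _ (\int[lm]_x (M * D x)%:E)).
  apply: ge0_le_integral => //.
  - by move=> x _; rewrite lee_fin mulr_ge0 //; case/andP: (gM x).
  - by apply/measurable_EFinP; exact: measurable_funM.
  - by apply/measurable_EFinP; exact: measurable_funM.
  - by move=> x _; rewrite lee_fin ler_wpM2r //; case/andP: (gM x).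
under eq_integral do rewrite EFinM.
rewrite ge0_integralZl //.
- by rewrite lte_mul_pinfty.
- exact/measurable_EFinP.
- by move=> x _; rewrite lee_fin.
Qed.

Lemma int_ge0 (D : dens R n) (g : T -> R) : (forall x, 0 <= g x)%R ->
  0 <= \int[lm]_x (g x * D x)%:E.
Proof. by move=> g0; apply: integral_ge0 => x _; rewrite lee_fin mulr_ge0 ?df0. Qed.

Lemma dens_scale (f : T -> R) (c : R) A : measurable A ->
  measurable_fun [set: T] f -> (forall x, 0 <= f x)%R -> (0 <= c)%R ->
  dens_meas (fun x => f x / c)%R A = \int[lm]_x ((\1_A x)%R * f x)%:E * (c^-1)%:E.
Proof.
move=> mA mf f0 c0; rewrite /dens_meas intRdE.
- rewrite -ge0_integralZr //.
  + by apply: eq_integral => x _; rewrite -EFinM mulrA.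
  + by apply/measurable_EFinP; apply: measurable_funM.
  + by move=> x _; rewrite lee_fin mulr_ge0.
  + by rewrite lee_fin invr_ge0.
- apply/measurable_EFinP; apply: measurable_funM => //; apply: measurable_funM => //.
- by move=> x; rewrite lee_fin !mulr_ge0 // invr_ge0.
Qed.

End Main.

Unset Implicit Arguments.

Theorem corollary1 (R : realType) (d : nat)
  (pdata : d.-tuple R -> R)
  (Phi : d.-tuple R -> d.-tuple R)
  (q : d.-tuple R -> R)            (* density of Phi_# gamma *)
  (L : d.-tuple R -> R)            (* x0 |-> p(y | x0), y fixed *)
  (PS1 : probability (d.-tuple R) R)
  (eps epsS : R) :
  (* p_data is a probability density *)
  measurable_fun [set: d.-tuple R] pdata ->
  (forall x, (0 <= pdata x)%R) ->
  intRd (fun x => (pdata x)%:E) = 1 ->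
  (* Phi measurable, one-to-one *)
  measurable_fun [set: d.-tuple R] Phi ->
  injective Phi ->
  (* Phi_# gamma has density q *)
  measurable_fun [set: d.-tuple R] q ->
  (forall x, (0 <= q x)%R) ->
  (forall A, measurable A ->
     pushf Phi (dens_meas (@gauss_pdf R d)) A = dens_meas q A) ->
  (* likelihood *)
  measurable_fun [set: d.-tuple R] L ->
  (forall x, (0 <= L x)%R) ->
  (exists M : R, forall x, (L x <= M)%R) ->
  0 < intRd (fun x => (L x * pdata x)%:E) ->
  0 < intRd (fun x => (L x * q x)%:E) ->
  (* TV hypotheses *)
  TV (dens_meas pdata) (pushf Phi (dens_meas (@gauss_pdf R d))) <= eps%:E ->
  let Z1 := fine (intRd (fun x => (L (Phi x) * gauss_pdf x)%:E)) in
  let p1 := fun A : set (d.-tuple R) =>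
     dens_meas (fun x => L (Phi x) * gauss_pdf x / Z1)%R A in
  TV p1 (PS1 : set _ -> \bar R) <= epsS%:E ->
  let Zy := fine (intRd (fun x => (L x * pdata x)%:E)) in
  let p0 := fun A : set (d.-tuple R) =>
     dens_meas (fun x => L x * pdata x / Zy)%R A in
  let kappa := (sup (range L) / Zy)%R in
  TV p0 (pushf Phi (PS1 : set _ -> \bar R)) <= (2 * kappa * eps + epsS)%:E.
Proof.
move=> mpd pd0 pd1 mPhi injPhi mq q0 Hpush mL L0 [M0 HM0] HZp HZq HTV1 Z1 p1 HTV2.
cbv zeta.
set Zy := fine (intRd (fun x => (L x * pdata x)%:E)).

pose Pd := Dens mpd pd0. pose Qd := Dens mq q0.
pose Gd := Dens (@measurable_gauss R d) (@gauss_ge0 R d).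
pose M := sup (range L).
have LM x : (L x <= M)%R.
  apply: ub_le_sup; last by exists x.
  by exists M0 => _ [y _ <-]; exact: HM0.
have M0' : (0 <= M)%R := le_trans (L0 [tuple of nseq d 0%R]) (LM _).
have LB x : (0 <= L x <= M)%R by rewrite L0 LM.
have F1 S : measurable S -> `|nu Pd S - nu Qd S| <= eps%:E.
  move=> mS; apply: le_trans HTV1; apply: ereal_sup_ubound; exists S => //.
  by rewrite Hpush // (dens_measE Pd mS) (dens_measE Qd mS).
have F2 : nu Pd setT = 1.
{ rewrite -pd1 intRdE //.
  all: try (by move=> x; rewrite lee_fin).
  all: try (exact/measurable_EFinP). }
have Pfin : nu Pd setT < +oo by rewrite F2 ltry.
have Qfin : nu Qd setT < +oo.
  have := F1 setT measurableT; rewrite F2.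
  have : 0 <= nu Qd setT by exact: measure_ge0.
  case: (nu Qd setT) => [r||] //=; try by rewrite ltry.
have finS (D : dens R d) S : measurable S -> nu D setT < +oo -> nu D S \is a fin_num.
  move=> mS Dfin; rewrite ge0_fin_numE; last exact: measure_ge0.
  exact: le_lt_trans (nu_le_setT D mS) Dfin.
have F1' S : measurable S -> `|nu Qd S - nu Pd S| <= eps%:E.
  by move=> mS; rewrite eabsC ?finS //; exact: F1.
have KEY2 (g : d.-tuple R -> R) : measurable_fun setT g -> (forall x, 0 <= g x <= M)%R ->
  (`| fine (\int[lam R d]_x (g x * df Pd x)%:E) - fine (\int[lam R d]_x (g x * df Qd x)%:E) | <= M * eps)%R.
  move=> mg gM.
  have K1 := keyTV M0' mg gM F1 Pfin Qfin.
  have K2 := keyTV M0' mg gM F1' Qfin Pfin.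
  have fa := int_fin M0' mg gM Pfin; have fb := int_fin M0' mg gM Qfin.
  move: K1 K2; rewrite -(fineK fa) -(fineK fb) -!EFinB !lee_fin => K1 K2.
  rewrite ler_norml; apply/andP; split; lra.
have ZpE : intRd (fun x => (L x * pdata x)%:E) = \int[lam R d]_x (L x * df Pd x)%:E.
{ rewrite intRdE //.
  all: try (by move=> x; rewrite lee_fin mulr_ge0).
  all: try (by apply/measurable_EFinP; exact: measurable_funM). }
have ZqE : intRd (fun x => (L (Phi x) * gauss_pdf x)%:E) = \int[lam R d]_x (L x * df Qd x)%:E.
{ rewrite intRdE //.
  all: try (by move=> x; rewrite lee_fin mulr_ge0 ?gauss_ge0).
  all: try (by apply/measurable_EFinP; apply: measurable_funM => //;
     [exact: measurableT_comp | exact: measurable_gauss]).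
  exact: (@pushF R d Phi Gd Qd mPhi Hpush L mL L0). }
have LPB x : (0 <= L x <= M)%R := LB x.
have ZpZq := KEY2 L mL LPB.
have fZp : \int[lam R d]_x (L x * df Pd x)%:E \is a fin_num := int_fin M0' mL LPB Pfin.
have fZq : \int[lam R d]_x (L x * df Qd x)%:E \is a fin_num := int_fin M0' mL LPB Qfin.
have Zy0 : (0 < Zy)%R.
  rewrite /Zy ZpE -lte_fin fineK //; by rewrite -ZpE.
have Z1E : Z1 = fine (\int[lam R d]_x (L x * df Qd x)%:E) by rewrite /Z1 ZqE.
have Z10 : (0 < Z1)%R.
  rewrite Z1E -lte_fin fineK //; apply: lt_le_trans HZq _; rewrite intRdE //.
  - by apply/measurable_EFinP; exact: measurable_funM.
  - by move=> x; rewrite lee_fin mulr_ge0.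
apply: ge_ereal_sup => _ [A mA <-].
have mPA : measurable (Phi @^-1` A) by rewrite -[X in measurable X]setTI; exact: mPhi.
pose gA := fun x => (\1_A x * L x)%R.
have mgA : measurable_fun setT gA by apply: measurable_funM.
have gAB x : (0 <= gA x <= M)%R.
  rewrite /gA indicE; case: (x \in A) => /=; rewrite ?mul1r ?mul0r ?lexx ?M0' //; exact: LB.
have ab := KEY2 gA mgA gAB.
have fa : \int[lam R d]_x (gA x * df Pd x)%:E \is a fin_num := int_fin M0' mgA gAB Pfin.
have fb : \int[lam R d]_x (gA x * df Qd x)%:E \is a fin_num := int_fin M0' mgA gAB Qfin.
have p0E : dens_meas (fun x => L x * pdata x / Zy)%R A =
    (fine (\int[lam R d]_x (gA x * df Pd x)%:E) / Zy)%:E.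
  rewrite (@dens_scale R d (fun x => L x * pdata x)%R Zy A mA) //; last 3 first.
  - exact: measurable_funM.
  - by move=> x; rewrite mulr_ge0.
  - exact: ltW.
  rewrite -[X in X * _](_ : \int[lam R d]_x (gA x * df Pd x)%:E = _); last first.
    by apply: eq_integral => x _; rewrite /gA /= mulrA.
  by rewrite -(fineK fa) -EFinM.
have p1E : p1 (Phi @^-1` A) = (fine (\int[lam R d]_x (gA x * df Qd x)%:E) / Z1)%:E.
  rewrite /p1 (@dens_scale R d (fun x => L (Phi x) * gauss_pdf x)%R Z1 _ mPA) //; last 3 first.
  - by apply: measurable_funM => //; [exact: measurableT_comp | exact: measurable_gauss].
  - by move=> x; rewrite mulr_ge0 ?gauss_ge0.
  - exact: ltW.
  rewrite -[X in X * _](_ : \int[lam R d]_x (gA (Phi x) * df Gd x)%:E = _); last first.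
    apply: eq_integral => x _; rewrite /gA /= mulrA; congr ((_ * _ * _)%:E).
  rewrite (@pushF R d Phi Gd Qd mPhi Hpush gA mgA); last by move=> x; case/andP: (gAB x).
  by rewrite -(fineK fb) -EFinM.
have HB : `|p1 (Phi @^-1` A) - PS1 (Phi @^-1` A)| <= epsS%:E.
  by apply: le_trans HTV2; apply: ereal_sup_ubound; exists (Phi @^-1` A).
have fPS : PS1 (Phi @^-1` A) \is a fin_num by apply: fin_num_measure.
rewrite p0E /pushf.
move: HB; rewrite p1E -(fineK fPS) -!EFinB !abse_EFin !lee_fin => HB.
set x0 := fine (\int[lam R d]_x (gA x * df Pd x)%:E) in ab *.
set y0 := fine (\int[lam R d]_x (gA x * df Qd x)%:E) in ab HB *.
set zp := fine (\int[lam R d]_x (L x * df Pd x)%:E) in ZpZq.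
set zq := fine (\int[lam R d]_x (L x * df Qd x)%:E) in ZpZq Z1E.
set w := fine (PS1 (Phi @^-1` A)) in HB *.
have Zyp : Zy = zp by rewrite /Zy ZpE.
have yq : (0 <= y0 <= zq)%R.
  apply/andP; split.
    by rewrite /y0 fine_ge0 // int_ge0 // => x; case/andP: (gAB x).
  rewrite /y0 /zq fine_le //; apply: ge0_le_integral => //.
  - by move=> x _; rewrite lee_fin mulr_ge0 ?df0 //; case/andP: (gAB x).
  - by apply/measurable_EFinP; apply: measurable_funM => //; exact: dmf.
  - by apply/measurable_EFinP; apply: measurable_funM => //; exact: dmf.
  - move=> x _; rewrite lee_fin ler_wpM2r ?df0 // /gA indicE.
    by case: (x \in A); rewrite /= ?mul1r ?mul0r.
have Me : (0 <= M * eps)%R := le_trans (normr_ge0 _) ab.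
have Zp0 : (0 < zp)%R by rewrite -Zyp.
have Zq0 : (0 < zq)%R by rewrite -Z1E.
have Hxy := realbound Zp0 Zq0 yq Me ab ZpZq.
rewrite -Zyp -Z1E in Hxy.
rewrite (_ : (x0 / Zy - w = (x0 / Zy - y0 / Z1) + (y0 / Z1 - w))%R); last by ring.
apply: le_trans (ler_normD _ _) _.
exact: lerD.
Qed.
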